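(* The loss of information about the receiver's orientation due to the nuisance parameters is $$\mathbf G(\boldsymbol\Phi_U,\boldsymbol\Phi_U)=\sum_b\frac{\mathbf a_b\mathbf a_b^T}{\sum_{u,k}\mathrm{SNR}_{bu,k}\omega_{bU,k}}+\frac{\mathbf a_Q\mathbf a_Q^T}{\sum_{q,u,k}\mathrm{SNR}_{qu,k}\omega_{qU,k}},$$ where $\mathbf a_b=\sum_{k,u}\mathrm{SNR}_{bu,k}\,\omega_{bU,k}\nabla_{\boldsymbol\Phi_U}\tau_{bu,k}$ and $\mathbf a_Q=\sum_{q,k,u}\mathrm{SNR}_{qu,k}\,\omega_{qU,k}\nabla_{\boldsymbol\Phi_U}\tau_{qu,k}$.
   Context: System: $N_B$ single-antenna LEO satellites indexed by $b$, $N_Q$ mutually synchronized single-antenna base stations (BSs) indexed by $q$, and a receiver with $N_U$ antennas indexed by $u$; transmissions occur in $N_K$ slots indexed by $k$, spaced $\Delta_t$ apart; $c$ is the speed of light, $f_c$ the carrier frequency. Receiver antenna $u$ is at $\mathbf p_{u,k}=\mathbf p_{U,0}+k\Delta_t\mathbf v_{U,0}+\mathbf Q(\boldsymbol\Phi_U)\tilde{\mathbf s}_u$, with $\mathbf Q(\boldsymbol\Phi_U)$ the 3D rotation matrix for orientation angles $\boldsymbol\Phi_U=[\alpha_U,\psi_U,\varphi_U]^T$ and $\tilde{\mathbf s}_u$ a known offset. LEO $b$ has known nominal position/velocity $\mathbf p_{b,k},\mathbf v_{b,k}$ and unknown constant position offset $\check{\mathbf p}_{b,0}$ and velocity offset $\check{\mathbf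 v}_{b,0}$; BSs are static and known. $\boldsymbol\Delta_{xy,k}$ is the unit vector from entity $x$ to entity $y$ at slot $k$ ($U$: receiver centroid, $u$: antenna $u$). Channel parameters: LEO–receiver link: delays $\tau_{bu,k}$, Dopplers $\nu_{bU,k}=\boldsymbol\Delta_{bU,k}^T(\mathbf v_{b,k}+\check{\mathbf v}_{b,0}-\mathbf v_{U,0})/c$, gains, time offset $\delta_{bU}$, frequency offset $\epsilon_{bU}$; BS–receiver link: delays $\tau_{qu,k}$, Dopplers $\nu_{qU,k}=-\boldsymbol\Delta_{qU,k}^T\mathbf v_{U,0}/c$, gains, common offsets $\delta_{QU},\epsilon_{QU}$; LEO–BS link: delays $\tau_{bq,k}$, Dopplers $\nu_{bq,k}=\boldsymbol\Delta_{bq,k}^T(\mathbf v_{b,k}+\check{\mathbf v}_{b,0})/c$, gains, offsets $\delta_{bQ},\epsilon_{bQ}$. $\mathrm{SNR}_{bu,k},\mathrm{SNR}_{qu,k},\mathrm{SNR}_{bq,k}$ are the received SNRs; $\alpha_{obu,k},\alpha_{oqu,k},\alpha_{obq,k}$ the RMS time durations; $\alpha_{1x,k},\alpha_{2x,k}$ the effective baseband bandwidth and baseband–carrier correlation of transmitter $x$; $f_{obU,k}=f_c(1-\nu_{bU,k})+\epsilon_{bU}$, $f_{oqU,k}=f_c(1-\nu_{qU,k})+\epsilon_{QU}$, $f_{obq,k}=f_c(1-\nu_{bq,k})+\epsilon_{bQ}$, and $\omega_{bU,k}=\alpha_{1b,k}^2+2f_{obU,k}\alpha_{1b,k}\alpha_{2b,k}+f_{obU,k}^2$,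 $\omega_{qU,k}=\alpha_{1q,k}^2+2f_{oqU,k}\alpha_{1q,k}\alpha_{2q,k}+f_{oqU,k}^2$, $\omega_{bq,k}=\alpha_{1q,k}^2+2f_{obq,k}\alpha_{1q,k}\alpha_{2q,k}+f_{obq,k}^2$. Channel-parameter FIM (links mutually independent, contributions additive): each observation (antenna $u$, slot $k$, LEO $b$) contributes $F(\tau_{bu,k},\tau_{bu,k})=F(\delta_{bU},\delta_{bU})=-F(\tau_{bu,k},\delta_{bU})=\mathrm{SNR}_{bu,k}\omega_{bU,k}$, $F(\nu_{bU,k},\nu_{bU,k})=\tfrac12\mathrm{SNR}_{bu,k}f_c^2\alpha_{obu,k}^2$, $F(\nu_{bU,k},\epsilon_{bU})=-\tfrac12\mathrm{SNR}_{bu,k}f_c\alpha_{obu,k}^2$, $F(\epsilon_{bU},\epsilon_{bU})=\tfrac12\mathrm{SNR}_{bu,k}\alpha_{obu,k}^2$, a gain-only diagonal term, and all other entries zero; the BS–receiver (indices $qu,k$, offsets $\delta_{QU},\epsilon_{QU}$, $\omega_{qU,k},\alpha_{oqu,k}$) and LEO–BS (indices $bq,k$, offsets $\delta_{bQ},\epsilon_{bQ}$, $\omega_{bq,k},\alpha_{obq,k}$) links are analogous. Location FIM: $\mathbf J_{\boldsymbol\kappa}=\boldsymbol\Upsilon\mathbf J_{\boldsymbol\eta}\boldsymbol\Upsilon^T$ where $\boldsymbol\Upsilon$ is the Jacobian with nonzero derivatives $\nabla_{\mathbf p_{U,0}}\tau_{bu,k}=\boldsymbol\Delta_{bu,k}/c$,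 $\nabla_{\mathbf p_{U,0}}\tau_{qu,k}=\boldsymbol\Delta_{qu,k}/c$, $\nabla_{\check{\mathbf p}_{b,0}}\tau_{bu,k}=-\boldsymbol\Delta_{bu,k}/c$, $\nabla_{\check{\mathbf p}_{b,0}}\tau_{bq,k}=-\boldsymbol\Delta_{bq,k}/c$, $\nabla_{\mathbf v_{U,0}}\tau_{bu,k}=k\Delta_t\boldsymbol\Delta_{bu,k}/c$, $\nabla_{\mathbf v_{U,0}}\tau_{qu,k}=k\Delta_t\boldsymbol\Delta_{qu,k}/c$, $\nabla_{\check{\mathbf v}_{b,0}}\tau_{bu,k}=-k\Delta_t\boldsymbol\Delta_{bu,k}/c$, $\nabla_{\check{\mathbf v}_{b,0}}\tau_{bq,k}=-k\Delta_t\boldsymbol\Delta_{bq,k}/c$, $\nabla_{\mathbf v_{U,0}}\nu_{bU,k}=-\boldsymbol\Delta_{bU,k}/c$, $\nabla_{\mathbf v_{U,0}}\nu_{qU,k}=-\boldsymbol\Delta_{qU,k}/c$, $\nabla_{\check{\mathbf v}_{b,0}}\nu_{bU,k}=\boldsymbol\Delta_{bU,k}/c$, $\nabla_{\check{\mathbf v}_{b,0}}\nu_{bq,k}=\boldsymbol\Delta_{bq,k}/c$, $\nabla_{\boldsymbol\Phi_U}\tau_{xu,k}=\frac1c[\boldsymbol\Delta_{xu,k}^T\partial_{\alpha_U}\mathbf Q\tilde{\mathbf s}_u,\boldsymbol\Delta_{xu,k}^T\partial_{\psi_U}\mathbf Q\tilde{\mathbf s}_u,\boldsymbol\Delta_{xu,k}^T\partial_{\varphi_U}\mathbf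 Q\tilde{\mathbf s}_u]^T$ ($x\in\{b,q\}$), the Doppler position-gradients $\nabla_{\mathbf p_{U,0}}\nu_{bU,k},\nabla_{\mathbf p_{U,0}}\nu_{qU,k},\nabla_{\check{\mathbf p}_{b,0}}\nu_{bU,k},\nabla_{\check{\mathbf p}_{b,0}}\nu_{bq,k}$, and identity on gains and offsets. $\mathbf F(\mathbf x,\mathbf y)$ denotes the block of $\mathbf J_{\boldsymbol\kappa}$ for sub-vectors $\mathbf x,\mathbf y$. Information loss: split $\boldsymbol\kappa=(\boldsymbol\kappa_1,\boldsymbol\kappa_2)$ with $\boldsymbol\kappa_1=(\mathbf p_{U,0},\mathbf v_{U,0},\boldsymbol\Phi_U,\{\check{\mathbf p}_{b,0}\},\{\check{\mathbf v}_{b,0}\})$ and nuisance $\boldsymbol\kappa_2$ = all channel gains and all time/frequency offsets $\delta_{bU},\epsilon_{bU},\delta_{QU},\epsilon_{QU},\delta_{bQ},\epsilon_{bQ}$. The loss matrix is $\mathbf J^{nu}=\mathbf J_{\boldsymbol\kappa_1,\boldsymbol\kappa_2}\mathbf J_{\boldsymbol\kappa_2}^{-1}\mathbf J_{\boldsymbol\kappa_1,\boldsymbol\kappa_2}^T$ (so the equivalent FIM is $\mathbf J_{\boldsymbol\kappa_1}-\mathbf J^{nu}$), and $\mathbf G(\mathbf x,\mathbf y)$ denotes its block for sub-vectors $\mathbf x,\mathbf y$. *)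

(* Defs.v *)
From HB Require Import structures.
From mathcomp Require Import all_boot all_order all_algebra.
Set Implicit Arguments. Unset Strict Implicit. Unset Printing Implicit Defensive.
Import Order.TTheory GRing.Theory Num.Theory.
Local Open Scope ring_scope.

(* kappa_1 : location parameters p_U0, v_U0, Phi_U, {pcheck_b0}, {vcheck_b0} *)
Inductive kap1 (NB : nat) :=
| KpU of 'I_3 | KvU of 'I_3 | KPhi of 'I_3
| Kpb of 'I_NB & 'I_3 | Kvb of 'I_NB & 'I_3.

(* kappa_2 : nuisance parameters: channel gains of the three link types and
   the offsets delta_bU, eps_bU, delta_QU, eps_QU, delta_bQ, eps_bQ *)
Inductive kap2 (NB NQ NU NK : nat) :=
| Gbu of 'I_NB & 'I_NU & 'I_NK
| Gqu of 'I_NQ & 'I_NU & 'I_NK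
| Gbq of 'I_NB & 'I_NQ & 'I_NK
| DbU of 'I_NB | EbU of 'I_NB
| DQU | EQU
| DbQ of 'I_NB | EbQ of 'I_NB.

(* eta : channel parameters: nuisance ones (shared with kappa_2) plus the
   delays and Dopplers of the three link types *)
Inductive eta (NB NQ NU NK : nat) :=
| Nuis of kap2 NB NQ NU NK
| Tbu of 'I_NB & 'I_NU & 'I_NK
| VbU of 'I_NB & 'I_NK
| Tqu of 'I_NQ & 'I_NU & 'I_NK
| VqU of 'I_NQ & 'I_NK
| Tbq of 'I_NB & 'I_NQ & 'I_NK
| Vbq of 'I_NB & 'I_NQ & 'I_NK.

Arguments KpU {NB}. Arguments KvU {NB}. Arguments KPhi {NB}.
Arguments Kpb {NB}. Arguments Kvb {NB}.
Arguments Gbu {NB NQ NU NK}. Arguments Gqu {NB NQ NU NK}.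
Arguments Gbq {NB NQ NU NK}. Arguments DbU {NB NQ NU NK}.
Arguments EbU {NB NQ NU NK}. Arguments DQU {NB NQ NU NK}.
Arguments EQU {NB NQ NU NK}. Arguments DbQ {NB NQ NU NK}.
Arguments EbQ {NB NQ NU NK}.
Arguments Nuis {NB NQ NU NK}. Arguments Tbu {NB NQ NU NK}.
Arguments VbU {NB NQ NU NK}. Arguments Tqu {NB NQ NU NK}.
Arguments VqU {NB NQ NU NK}. Arguments Tbq {NB NQ NU NK}.
Arguments Vbq {NB NQ NU NK}.

Section FinInstances.
Variables NB NQ NU NK : nat.

Definition kap1_enc (x : kap1 NB) :
  ('I_3 + 'I_3 + 'I_3 + ('I_NB * 'I_3) + ('I_NB * 'I_3))%type :=
  match x with
  | KpU i => inl (inl (inl (inl i)))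
  | KvU i => inl (inl (inl (inr i)))
  | KPhi i => inl (inl (inr i))
  | Kpb b i => inl (inr (b, i))
  | Kvb b i => inr (b, i)
  end.
Definition kap1_dec (y : ('I_3 + 'I_3 + 'I_3 + ('I_NB * 'I_3) + ('I_NB * 'I_3))%type)
  : kap1 NB :=
  match y with
  | inl (inl (inl (inl i))) => KpU i
  | inl (inl (inl (inr i))) => KvU i
  | inl (inl (inr i)) => KPhi i
  | inl (inr (b, i)) => Kpb b i
  | inr (b, i) => Kvb b i
  end.
Lemma kap1_encK : cancel kap1_enc kap1_dec. Proof. by case. Qed.
HB.instance Definition _ := Finite.copy (kap1 NB) (can_type kap1_encK).

Definition kap2_code :=
  (('I_NB * 'I_NU * 'I_NK) + ('I_NQ * 'I_NU * 'I_NK) + ('I_NB * 'I_NQ * 'I_NK)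
   + 'I_NB + 'I_NB + unit + unit + 'I_NB + 'I_NB)%type.
Definition kap2_enc (x : kap2 NB NQ NU NK) : kap2_code :=
  match x with
  | Gbu b u k => inl (inl (inl (inl (inl (inl (inl (inl (b, u, k))))))))
  | Gqu q u k => inl (inl (inl (inl (inl (inl (inl (inr (q, u, k))))))))
  | Gbq b q k => inl (inl (inl (inl (inl (inl (inr (b, q, k)))))))
  | DbU b => inl (inl (inl (inl (inl (inr b)))))
  | EbU b => inl (inl (inl (inl (inr b))))
  | DQU => inl (inl (inl (inr tt)))
  | EQU => inl (inl (inr tt))
  | DbQ b => inl (inr b)
  | EbQ b => inr b
  end.
Definition kap2_dec (y : kap2_code) : kap2 NB NQ NU NK :=
  match y with
  | inl (inl (inl (inl (inl (inl (inl (inl (b, u, k)))))))) => Gbu b u k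
  | inl (inl (inl (inl (inl (inl (inl (inr (q, u, k)))))))) => Gqu q u k
  | inl (inl (inl (inl (inl (inl (inr (b, q, k))))))) => Gbq b q k
  | inl (inl (inl (inl (inl (inr b))))) => DbU b
  | inl (inl (inl (inl (inr b)))) => EbU b
  | inl (inl (inl (inr _))) => DQU
  | inl (inl (inr _)) => EQU
  | inl (inr b) => DbQ b
  | inr b => EbQ b
  end.
Lemma kap2_encK : cancel kap2_enc kap2_dec. Proof. by case. Qed.
HB.instance Definition _ := Finite.copy (kap2 NB NQ NU NK) (can_type kap2_encK).

Definition eta_code :=
  (kap2 NB NQ NU NK + ('I_NB * 'I_NU * 'I_NK) + ('I_NB * 'I_NK)
   + ('I_NQ * 'I_NU * 'I_NK) + ('I_NQ * 'I_NK)
   + ('I_NB * 'I_NQ * 'I_NK) + ('I_NB * 'I_NQ * 'I_NK))%type.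
Definition eta_enc (x : eta NB NQ NU NK) : eta_code :=
  match x with
  | Nuis n => inl (inl (inl (inl (inl (inl n)))))
  | Tbu b u k => inl (inl (inl (inl (inl (inr (b, u, k))))))
  | VbU b k => inl (inl (inl (inl (inr (b, k)))))
  | Tqu q u k => inl (inl (inl (inr (q, u, k))))
  | VqU q k => inl (inl (inr (q, k)))
  | Tbq b q k => inl (inr (b, q, k))
  | Vbq b q k => inr (b, q, k)
  end.
Definition eta_dec (y : eta_code) : eta NB NQ NU NK :=
  match y with
  | inl (inl (inl (inl (inl (inl n))))) => Nuis n
  | inl (inl (inl (inl (inl (inr (b, u, k)))))) => Tbu b u k
  | inl (inl (inl (inl (inr (b, k))))) => VbU b k
  | inl (inl (inl (inr (q, u, k)))) => Tqu q u k
  | inl (inl (inr (q, k))) => VqU q k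
  | inl (inr (b, q, k)) => Tbq b q k
  | inr (b, q, k) => Vbq b q k
  end.
Lemma eta_encK : cancel eta_enc eta_dec. Proof. by case. Qed.
HB.instance Definition _ := Finite.copy (eta NB NQ NU NK) (can_type eta_encK).
End FinInstances.

(* System data (all quantities evaluated at the true parameter values).    *)
Record system (R : realFieldType) (NB NQ NU NK : nat) := System {
  c_light : R;
  fc : R;
  dt : R;                                    (* slot spacing Delta_t *)
  SNRbu : 'I_NB -> 'I_NU -> 'I_NK -> R;
  SNRqu : 'I_NQ -> 'I_NU -> 'I_NK -> R;
  SNRbq : 'I_NB -> 'I_NQ -> 'I_NK -> R;
  (* RMS time durations alpha_o *)
  aobu : 'I_NB -> 'I_NU -> 'I_NK -> R;
  aoqu : 'I_NQ -> 'I_NU -> 'I_NK -> R;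
  aobq : 'I_NB -> 'I_NQ -> 'I_NK -> R;
  (* effective baseband bandwidth alpha_1 and correlation alpha_2 of the
     transmitters (LEO b, BS q) *)
  a1b : 'I_NB -> 'I_NK -> R; a2b : 'I_NB -> 'I_NK -> R;
  a1q : 'I_NQ -> 'I_NK -> R; a2q : 'I_NQ -> 'I_NK -> R;
  epsbU : 'I_NB -> R; epsQU : R; epsbQ : 'I_NB -> R;
  (* velocities: receiver v_U0, nominal LEO v_{b,k}, LEO offset vcheck_b0 *)
  vU : 'I_3 -> R;
  vb : 'I_NB -> 'I_NK -> 'I_3 -> R;
  vcb : 'I_NB -> 'I_3 -> R;
  (* unit direction vectors Delta_{xy,k} *)
  Delta_bu : 'I_NB -> 'I_NU -> 'I_NK -> 'I_3 -> R;
  Delta_qu : 'I_NQ -> 'I_NU -> 'I_NK -> 'I_3 -> R;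
  Delta_bq : 'I_NB -> 'I_NQ -> 'I_NK -> 'I_3 -> R;
  Delta_bU : 'I_NB -> 'I_NK -> 'I_3 -> R;
  Delta_qU : 'I_NQ -> 'I_NK -> 'I_3 -> R;
  (* partial derivatives of the rotation matrix Q(Phi_U) w.r.t.
     alpha_U, psi_U, varphi_U (index a), entries (i, j) *)
  dQ : 'I_3 -> 'I_3 -> 'I_3 -> R;
  (* known antenna offsets stilde_u *)
  stilde : 'I_NU -> 'I_3 -> R;
  (* Doppler position-gradients (left unspecified in the paper) *)
  gradpU_nubU : 'I_NB -> 'I_NK -> 'I_3 -> R;
  gradpU_nuqU : 'I_NQ -> 'I_NK -> 'I_3 -> R;
  gradpb_nubU : 'I_NB -> 'I_NK -> 'I_3 -> R;
  gradpb_nubq : 'I_NB -> 'I_NQ -> 'I_NK -> 'I_3 -> R;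
  (* gain-only diagonal FIM terms of each observation *)
  Fgain_bu : 'I_NB -> 'I_NU -> 'I_NK -> R;
  Fgain_qu : 'I_NQ -> 'I_NU -> 'I_NK -> R;
  Fgain_bq : 'I_NB -> 'I_NQ -> 'I_NK -> R
}.

Section Model.
Variables (R : realFieldType) (NB NQ NU NK : nat) (S : system R NB NQ NU NK).

Definition dot3 (x y : 'I_3 -> R) : R := \sum_(i < 3) x i * y i.

Definition nu_bU b k : R :=
  dot3 (Delta_bU S b k) (fun i => vb S b k i + vcb S b i - vU S i) / c_light S.
Definition nu_qU q k : R := - dot3 (Delta_qU S q k) (vU S) / c_light S.
Definition nu_bq b q k : R :=
  dot3 (Delta_bq S b q k) (fun i => vb S b k i + vcb S b i) / c_light S.

Definition f_obU b k : R := fc S * (1 - nu_bU b k) + epsbU S b.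
Definition f_oqU q k : R := fc S * (1 - nu_qU q k) + epsQU S.
Definition f_obq b q k : R := fc S * (1 - nu_bq b q k) + epsbQ S b.

Definition omega_bU b k : R :=
  a1b S b k ^+ 2 + 2 * f_obU b k * a1b S b k * a2b S b k + f_obU b k ^+ 2.
Definition omega_qU q k : R :=
  a1q S q k ^+ 2 + 2 * f_oqU q k * a1q S q k * a2q S q k + f_oqU q k ^+ 2.
Definition omega_bq b q k : R :=
  a1q S q k ^+ 2 + 2 * f_obq b q k * a1q S q k * a2q S q k + f_obq b q k ^+ 2.

Definition gradPhi_tau (Delta : 'I_3 -> R) (u : 'I_NU) (a : 'I_3) : R :=
  (\sum_(i < 3) \sum_(j < 3) Delta i * dQ S a i j * stilde S u j) / c_light S.

Notation etaT := (eta NB NQ NU NK).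
Notation kap2T := (kap2 NB NQ NU NK).

Definition Eind (p q m n : etaT) : R := ((m == p) && (n == q))%:R.

Definition Jeta (m n : etaT) : R :=
  \sum_(b < NB) \sum_(u < NU) \sum_(k < NK)
    ( SNRbu S b u k * omega_bU b k *
        (Eind (Tbu b u k) (Tbu b u k) m n + Eind (Nuis (DbU b)) (Nuis (DbU b)) m n
         - Eind (Tbu b u k) (Nuis (DbU b)) m n - Eind (Nuis (DbU b)) (Tbu b u k) m n)
    + 2^-1 * SNRbu S b u k * fc S ^+ 2 * aobu S b u k ^+ 2 * Eind (VbU b k) (VbU b k) m n
    - 2^-1 * SNRbu S b u k * fc S * aobu S b u k ^+ 2 *
        (Eind (VbU b k) (Nuis (EbU b)) m n + Eind (Nuis (EbU b)) (VbU b k) m n)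
    + 2^-1 * SNRbu S b u k * aobu S b u k ^+ 2 * Eind (Nuis (EbU b)) (Nuis (EbU b)) m n
    + Fgain_bu S b u k * Eind (Nuis (Gbu b u k)) (Nuis (Gbu b u k)) m n )
  + \sum_(q < NQ) \sum_(u < NU) \sum_(k < NK)
    ( SNRqu S q u k * omega_qU q k *
        (Eind (Tqu q u k) (Tqu q u k) m n + Eind (Nuis DQU) (Nuis DQU) m n
         - Eind (Tqu q u k) (Nuis DQU) m n - Eind (Nuis DQU) (Tqu q u k) m n)
    + 2^-1 * SNRqu S q u k * fc S ^+ 2 * aoqu S q u k ^+ 2 * Eind (VqU q k) (VqU q k) m n
    - 2^-1 * SNRqu S q u k * fc S * aoqu S q u k ^+ 2 *
        (Eind (VqU q k) (Nuis EQU) m n + Eind (Nuis EQU) (VqU q k) m n)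
    + 2^-1 * SNRqu S q u k * aoqu S q u k ^+ 2 * Eind (Nuis EQU) (Nuis EQU) m n
    + Fgain_qu S q u k * Eind (Nuis (Gqu q u k)) (Nuis (Gqu q u k)) m n )
  + \sum_(b < NB) \sum_(q < NQ) \sum_(k < NK)
    ( SNRbq S b q k * omega_bq b q k *
        (Eind (Tbq b q k) (Tbq b q k) m n + Eind (Nuis (DbQ b)) (Nuis (DbQ b)) m n
         - Eind (Tbq b q k) (Nuis (DbQ b)) m n - Eind (Nuis (DbQ b)) (Tbq b q k) m n)
    + 2^-1 * SNRbq S b q k * fc S ^+ 2 * aobq S b q k ^+ 2 * Eind (Vbq b q k) (Vbq b q k) m n
    - 2^-1 * SNRbq S b q k * fc S * aobq S b q k ^+ 2 *
        (Eind (Vbq b q k) (Nuis (EbQ b)) m n + Eind (Nuis (EbQ b)) (Vbq b q k) m n)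
    + 2^-1 * SNRbq S b q k * aobq S b q k ^+ 2 * Eind (Nuis (EbQ b)) (Nuis (EbQ b)) m n
    + Fgain_bq S b q k * Eind (Nuis (Gbq b q k)) (Nuis (Gbq b q k)) m n ).

Definition kslot (k : 'I_NK) : R := (nat_of_ord k)%:R.

(* Jacobian Upsilon: rows indexed by kappa_1, entries d eta_m / d kappa_i *)
Definition Ups1 (i : kap1 NB) (m : etaT) : R :=
  let c := c_light S in
  match i, m with
  | KpU j, Tbu b u k => Delta_bu S b u k j / c
  | KpU j, Tqu q u k => Delta_qu S q u k j / c
  | KpU j, VbU b k => gradpU_nubU S b k j
  | KpU j, VqU q k => gradpU_nuqU S q k j
  | KvU j, Tbu b u k => kslot k * dt S * Delta_bu S b u k j / c
  | KvU j, Tqu q u k => kslot k * dt S * Delta_qu S q u k j / c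
  | KvU j, VbU b k => - Delta_bU S b k j / c
  | KvU j, VqU q k => - Delta_qU S q k j / c
  | KPhi j, Tbu b u k => gradPhi_tau (Delta_bu S b u k) u j
  | KPhi j, Tqu q u k => gradPhi_tau (Delta_qu S q u k) u j
  | Kpb b' j, Tbu b u k => (b' == b)%:R * (- Delta_bu S b u k j / c)
  | Kpb b' j, Tbq b q k => (b' == b)%:R * (- Delta_bq S b q k j / c)
  | Kpb b' j, VbU b k => (b' == b)%:R * gradpb_nubU S b k j
  | Kpb b' j, Vbq b q k => (b' == b)%:R * gradpb_nubq S b q k j
  | Kvb b' j, Tbu b u k => (b' == b)%:R * (- (kslot k * dt S * Delta_bu S b u k j) / c)
  | Kvb b' j, Tbq b q k => (b' == b)%:R * (- (kslot k * dt S * Delta_bq S b q k j) / c)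
  | Kvb b' j, VbU b k => (b' == b)%:R * (Delta_bU S b k j / c)
  | Kvb b' j, Vbq b q k => (b' == b)%:R * (Delta_bq S b q k j / c)
  | _, _ => 0
  end.

Definition Ups (i : (kap1 NB + kap2T)%type) (m : etaT) : R :=
  match i with
  | inl i1 => Ups1 i1 m
  | inr i2 => (m == Nuis i2)%:R
  end.

Definition Jkappa (i j : (kap1 NB + kap2T)%type) : R :=
  \sum_(m : etaT) \sum_(n : etaT) Ups i m * Jeta m n * Ups j n.

Definition J12 (i : kap1 NB) (j : kap2T) : R := Jkappa (inl i) (inr j).
Definition J22 (i j : kap2T) : R := Jkappa (inr i) (inr j).

Definition J22mx : 'M[R]_#|{: kap2T}| :=
  \matrix_(i, j) J22 (enum_val i) (enum_val j).
Definition J22inv (i j : kap2T) : R :=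
  invmx J22mx (enum_rank i) (enum_rank j).

Definition Gloss (i j : kap1 NB) : R :=
  \sum_(m : kap2T) \sum_(n : kap2T) J12 i m * J22inv m n * J12 j n.

Definition G_PhiPhi : 'M[R]_3 := \matrix_(i, j) Gloss (KPhi i) (KPhi j).

Definition a_b (b : 'I_NB) (i : 'I_3) : R :=
  \sum_(k < NK) \sum_(u < NU) SNRbu S b u k * omega_bU b k * gradPhi_tau (Delta_bu S b u k) u i.
Definition a_Q (i : 'I_3) : R :=
  \sum_(q < NQ) \sum_(k < NK) \sum_(u < NU) SNRqu S q u k * omega_qU q k * gradPhi_tau (Delta_qu S q u k) u i.
Definition den_b (b : 'I_NB) : R := \sum_(u < NU) \sum_(k < NK) SNRbu S b u k * omega_bU b k.
Definition den_Q : R := \sum_(q < NQ) \sum_(u < NU) \sum_(k < NK) SNRqu S q u k * omega_qU q k.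

Definition outer3 (a : 'I_3 -> R) : 'M[R]_3 := \matrix_(i < 3, j < 3) (a i * a j).

End Model.

(* Main.v *)
Require Import Defs.
From HB Require Import structures.
From mathcomp Require Import all_boot all_order all_algebra.
From mathcomp Require Import ring.
Import Order.TTheory GRing.Theory Num.Theory.
Local Open Scope ring_scope.

Section H.
Variables (R : realFieldType) (NB NQ NU NK : nat) (S : system R NB NQ NU NK).
Notation etaT := (Defs.eta NB NQ NU NK).
Notation kap2T := (kap2 NB NQ NU NK).

Lemma sum3_0 (I J K : finType) (F : I -> J -> K -> R) :
  (forall i j k, F i j k = 0) -> \sum_i \sum_j \sum_k F i j k = 0.
Proof. move=> H; apply: big1 => i _; apply: big1 => j _; apply: big1 => k _; exact: H. Qed.

Lemma sum_delta (I : finType) (y : I) (f : I -> R) : \sum_x (x == y)%:R * f x = f y.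
Proof.
rewrite (bigD1 y) //= eqxx mul1r big1 ?addr0 // => x /negbTE ->; by rewrite mul0r.
Qed.

Lemma sum_delta_r (I : finType) (y : I) (f : I -> R) : \sum_x f x * (x == y)%:R = f y.
Proof.
rewrite (bigD1 y) //= eqxx mulr1 big1 ?addr0 // => x /negbTE ->; by rewrite mulr0.
Qed.

Lemma sum3_delta (I J K : finType) (b : I) (u : J) (k : K) (F H : I -> J -> K -> R) :
  (forall b' u' k', F b' u' k' = (b' == b)%:R * ((u' == u)%:R * ((k' == k)%:R * H b' u' k'))) ->
  \sum_b' \sum_u' \sum_k' F b' u' k' = H b u k.
Proof.
move=> HF.
rewrite -[RHS](@sum_delta _ b (fun b' => H b' u k)).
apply: eq_bigr => b' _.
rewrite -[H b' u k](@sum_delta _ u (fun u' => H b' u' k)) mulr_sumr.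
apply: eq_bigr => u' _.
rewrite -[H b' u' k](@sum_delta _ k (fun k' => H b' u' k')) !mulr_sumr.
by apply: eq_bigr => k' _; rewrite HF.
Qed.

Lemma sum3_deltaE (I J K : finType) (b : I) (u : J) (k : K) (H : I -> J -> K -> R) :
  H b u k = \sum_b' \sum_u' \sum_k' (b' == b)%:R * ((u' == u)%:R * ((k' == k)%:R * H b' u' k')).
Proof. by symmetry; apply: sum3_delta. Qed.

Lemma sum3_deltaO (n1 n2 n3 : nat) (b : 'I_n1) (u : 'I_n2) (k : 'I_n3) (H : 'I_n1 -> 'I_n2 -> 'I_n3 -> R) :
  H b u k = \sum_(b' < n1) \sum_(u' < n2) \sum_(k' < n3) (b' == b)%:R * ((u' == u)%:R * ((k' == k)%:R * H b' u' k')).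
Proof. exact: sum3_deltaE. Qed.

Lemma delta3 (I J K : finType) (C : I -> J -> K -> etaT) (g : I -> J -> K -> R) (F : etaT -> R) :
  \sum_m (\sum_b \sum_u \sum_k (m == C b u k)%:R * g b u k) * F m
  = \sum_b \sum_u \sum_k g b u k * F (C b u k).
Proof.
under eq_bigr do rewrite big_distrl /=.
rewrite exchange_big; apply: eq_bigr => b _.
under eq_bigr do rewrite big_distrl /=.
rewrite exchange_big; apply: eq_bigr => u _.
under eq_bigr do rewrite big_distrl /=.
rewrite exchange_big; apply: eq_bigr => k _.
under eq_bigr do rewrite mulrAC.
transitivity (\sum_i (i == C b u k)%:R * (F i * g b u k)).
  by apply: eq_bigr => i _; rewrite mulrA.
by rewrite sum_delta mulrC.
Qed.

Lemma eqTbu b u k b' u' k' :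
  (Tbu b u k == Tbu b' u' k' :> etaT) = [&& b == b', u == u' & k == k'].
Proof.
apply/eqP/and3P => [[-> -> ->]|[/eqP-> /eqP-> /eqP->]] //; split; exact/eqP.
Qed.
Lemma eqTqu b u k b' u' k' :
  (Tqu b u k == Tqu b' u' k' :> etaT) = [&& b == b', u == u' & k == k'].
Proof.
apply/eqP/and3P => [[-> -> ->]|[/eqP-> /eqP-> /eqP->]] //; split; exact/eqP.
Qed.
Lemma eqNuis x y : (Nuis x == Nuis y :> etaT) = (x == y).
Proof. by apply/eqP/eqP => [[]|->]. Qed.


Lemma eqDbU b b' : (DbU b == DbU b' :> kap2T) = (b' == b).
Proof. by apply/eqP/eqP => [[]|->]. Qed.

Ltac gen_eqs := repeat match goal with |- context[nat_of_bool ?a] => generalize (nat_of_bool a); intro end.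

Lemma EindE (p q m n : etaT) : Eind R p q m n = (m == p)%:R * (n == q)%:R.
Proof. by rewrite /Eind -natrM mulnb. Qed.

Lemma eqTbuR b u k b' u' k' :
  (Tbu b u k == Tbu b' u' k' :> etaT)%:R = (b' == b)%:R * (u' == u)%:R * (k' == k)%:R :> R.
Proof. by rewrite eqTbu (eq_sym b) (eq_sym u) (eq_sym k); do 3 case: eqP => _; rewrite /= ?(mulr1, mulr0, mul0r). Qed.
Lemma eqTquR b u k b' u' k' :
  (Tqu b u k == Tqu b' u' k' :> etaT)%:R = (b' == b)%:R * (u' == u)%:R * (k' == k)%:R :> R.
Proof. by rewrite eqTqu (eq_sym b) (eq_sym u) (eq_sym k); do 3 case: eqP => _; rewrite /= ?(mulr1, mulr0, mul0r). Qed.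

Lemma F5 b u k j : Jeta S (Tbu b u k) (Nuis j) =
   - ((j == DbU b)%:R * (SNRbu S b u k * omega_bU S b k)).
Proof.
rewrite /Jeta -[RHS]addr0 -[RHS]addr0.
congr (_ + _ + _).
- apply: (etrans _ (esym (@sum3_deltaO _ _ _ b u k (fun b u k => - ((j == DbU b)%:R * (SNRbu S b u k * omega_bU S b k)))))).
  apply: eq_bigr => b1 _; apply: eq_bigr => u1 _; apply: eq_bigr => k1 _.
  rewrite !EindE /= eqTbuR eqNuis; gen_eqs; ring.
- apply: sum3_0 => *; rewrite !EindE /=; gen_eqs; ring.
- apply: sum3_0 => *; rewrite !EindE /=; gen_eqs; ring.
Qed.

Lemma F6 q u k j : Jeta S (Tqu q u k) (Nuis j) =
   - ((j == DQU)%:R * (SNRqu S q u k * omega_qU S q k)).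
Proof.
rewrite /Jeta -[RHS]add0r -[RHS]addr0.
congr (_ + _ + _).
- apply: sum3_0 => *; rewrite !EindE /=; gen_eqs; ring.
- apply: (etrans _ (esym (@sum3_deltaO _ _ _ q u k (fun q u k => - ((j == DQU)%:R * (SNRqu S q u k * omega_qU S q k)))))).
  apply: eq_bigr => b1 _; apply: eq_bigr => u1 _; apply: eq_bigr => k1 _.
  rewrite !EindE /= eqTquR eqNuis; gen_eqs; ring.
- apply: sum3_0 => *; rewrite !EindE /=; gen_eqs; ring.
Qed.

Lemma F1 i j : i != j -> Jeta S (Nuis i) (Nuis j) = 0.
Proof.
move=> ij.
have P x : Eind R (Nuis x) (Nuis x) (Nuis i) (Nuis j) = 0.
  rewrite EindE !eqNuis.
  have [<-|nx] := eqVneq i x; [by rewrite eq_sym (negbTE ij) mulr0 | by rewrite mul0r].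
rewrite /Jeta -[RHS]addr0 -[RHS]addr0.
congr (_ + _ + _); apply: sum3_0 => *; rewrite !P !EindE /=; gen_eqs; ring.
Qed.

Lemma sum_deltaO n (y : 'I_n) (f : 'I_n -> R) : f y = \sum_(x < n) (x == y)%:R * f x.
Proof. by rewrite sum_delta. Qed.

Lemma F2 b0 : Jeta S (Nuis (DbU b0)) (Nuis (DbU b0)) = den_b S b0.
Proof.
rewrite /Jeta /den_b -[RHS]addr0 -[RHS]addr0.
congr (_ + _ + _).
- apply: (etrans _ (esym (@sum_deltaO _ b0 (fun b => \sum_(u < NU) \sum_(k < NK) SNRbu S b u k * omega_bU S b k)))).
  apply: eq_bigr => b1 _; rewrite mulr_sumr; apply: eq_bigr => u1 _; rewrite mulr_sumr; apply: eq_bigr => k1 _.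
  rewrite !EindE !eqNuis eqDbU /=; case: (b1 == b0); rewrite /=; gen_eqs; ring.
- apply: sum3_0 => *; rewrite !EindE /=; gen_eqs; ring.
- apply: sum3_0 => *; rewrite !EindE /=; gen_eqs; ring.
Qed.
Lemma F3 : Jeta S (Nuis DQU) (Nuis DQU) = den_Q S.
Proof.
rewrite /Jeta /den_Q -[RHS]add0r -[RHS]addr0.
congr (_ + _ + _).
- apply: sum3_0 => *; rewrite !EindE /=; gen_eqs; ring.
- apply: eq_bigr => b1 _; apply: eq_bigr => u1 _; apply: eq_bigr => k1 _.
  rewrite !EindE /=; gen_eqs; ring.
- apply: sum3_0 => *; rewrite !EindE /=; gen_eqs; ring.
Qed.

Lemma J22E i j : J22 S i j = Jeta S (Nuis i) (Nuis j).
Proof.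
rewrite /J22 /Jkappa /=.
under eq_bigr do rewrite sum_delta_r.
exact: sum_delta.
Qed.

Lemma J12E a j : J12 S (KPhi a) j = \sum_m Ups1 S (KPhi a) m * Jeta S m (Nuis j).
Proof.
rewrite /J12 /Jkappa /=.
apply: eq_bigr => m _; exact: sum_delta_r.
Qed.

Lemma UpsPhi a m : Ups1 S (KPhi a) m =
  \sum_(b < NB) \sum_(u < NU) \sum_(k < NK) (m == Tbu b u k)%:R * gradPhi_tau S (Delta_bu S b u k) u a
  + \sum_(q < NQ) \sum_(u < NU) \sum_(k < NK) (m == Tqu q u k)%:R * gradPhi_tau S (Delta_qu S q u k) u a.
Proof.
case: m => [x|b u k|b k|q u k|q k|b q k|b q k] /=.
- rewrite !sum3_0 ?addr0 // => *; gen_eqs; ring.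
- rewrite [X in _ + X]sum3_0 ?addr0; last by move=> *; gen_eqs; ring.
  symmetry; apply: (etrans _ (esym (@sum3_deltaO _ _ _ b u k (fun b u k => gradPhi_tau S (Delta_bu S b u k) u a)))).
  apply: eq_bigr => b1 _; apply: eq_bigr => u1 _; apply: eq_bigr => k1 _.
  rewrite eqTbuR; gen_eqs; ring.
- rewrite !sum3_0 ?addr0 // => *; gen_eqs; ring.
- rewrite [X in X + _]sum3_0 ?add0r; last by move=> *; gen_eqs; ring.
  symmetry; apply: (etrans _ (esym (@sum3_deltaO _ _ _ q u k (fun q u k => gradPhi_tau S (Delta_qu S q u k) u a)))).
  apply: eq_bigr => b1 _; apply: eq_bigr => u1 _; apply: eq_bigr => k1 _.
  rewrite eqTquR; gen_eqs; ring.
- rewrite !sum3_0 ?addr0 // => *; gen_eqs; ring.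
- rewrite !sum3_0 ?addr0 // => *; gen_eqs; ring.
- rewrite !sum3_0 ?addr0 // => *; gen_eqs; ring.
Qed.

Definition Pv (j : kap2T) (a : 'I_3) : R :=
  match j with DbU b => a_b S b a | DQU => a_Q S a | _ => 0 end.

Lemma J12Phi a j : J12 S (KPhi a) j = - Pv j a.
Proof.
rewrite J12E.
under eq_bigr do rewrite UpsPhi mulrDl.
rewrite big_split /= !delta3.
under eq_bigr do under eq_bigr do under eq_bigr do rewrite F5.
under [X in _ + X]eq_bigr do under eq_bigr do under eq_bigr do rewrite F6.
case: j => [b u k|q u k|b q k|b0|b|||b|b] /=;
  try by rewrite !sum3_0 ?addr0 ?oppr0 // => *; gen_eqs; ring.
- rewrite [X in _ + X]sum3_0 ?addr0; last by move=> *; gen_eqs; ring.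
  rewrite /a_b [in X in _ = X]exchange_big /=.
  apply: (etrans _ (esym (@sum_deltaO _ b0 (fun b => - \sum_(u < NU) \sum_(k < NK) SNRbu S b u k * omega_bU S b k * gradPhi_tau S (Delta_bu S b u k) u a)))).
  apply: eq_bigr => b1 _; rewrite mulrN -mulNr mulr_sumr; apply: eq_bigr => u1 _.
  rewrite mulr_sumr; apply: eq_bigr => k1 _.
  rewrite eqDbU; gen_eqs; ring.
- rewrite [X in X + _]sum3_0 ?add0r; last by move=> *; gen_eqs; ring.
  rewrite /a_Q -sumrN; apply: eq_bigr => q1 _.
  rewrite exchange_big /= -sumrN; apply: eq_bigr => u1 _.
  rewrite -sumrN; apply: eq_bigr => k1 _.
  gen_eqs; ring.
Qed.

Lemma J22invE (HJ2 : J22mx S \in unitmx) m n :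
  J22inv S m n = (m == n)%:R / J22 S n n.
Proof.
set A := J22mx S.
have Adiag (i j : 'I_#|{: kap2T}|) : i != j -> J22 S (enum_val i) (enum_val j) = 0.
  move=> ij; rewrite J22E F1 //.
  by rewrite (inj_eq enum_val_inj).
have key i j : invmx A i j * J22 S (enum_val j) (enum_val j) = (i == j)%:R.
  have := mulVmx HJ2; move/matrixP/(_ i j); rewrite /A /J22mx !mxE => <-.
  rewrite (bigD1 j) //= big1 ?addr0; first by rewrite mxE.
  move=> l lj; by rewrite mxE Adiag ?mulr0.
have nz (j : 'I_#|{: kap2T}|) : J22 S (enum_val j) (enum_val j) != 0.
  have := mulmxV HJ2; move/matrixP/(_ j j); rewrite /A /J22mx !mxE.
  rewrite (bigD1 j) //= big1 ?addr0; last by move=> l lj; rewrite mxE Adiag ?mul0r // eq_sym.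
  rewrite mxE eqxx => h; apply/eqP => h0; move: h; rewrite h0 mul0r => /eqP.
  by rewrite /= mulr1n eq_sym oner_eq0.
rewrite /J22inv.
have := key (enum_rank m) (enum_rank n).
have := nz (enum_rank n).
rewrite enum_rankK (inj_eq enum_rank_inj) => nz' h.
by rewrite -h mulfK.
Qed.

Lemma GlossE (HJ2 : J22mx S \in unitmx) a c :
  Gloss S (KPhi a) (KPhi c) =
  \sum_(b < NB) (den_b S b)^-1 * (a_b S b a * a_b S b c) + (den_Q S)^-1 * (a_Q S a * a_Q S c).
Proof.
rewrite /Gloss.
under eq_bigr do under eq_bigr do rewrite J22invE // !J12Phi.
have E m : \sum_n - Pv m a * ((m == n)%:R / J22 S n n) * - Pv n c
          = Pv m a * Pv m c / J22 S m m.
  rewrite -(@sum_delta _ m (fun n => Pv m a * Pv n c / J22 S n n)).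
  apply: eq_bigr => n _; have [<-|mn] := eqVneq m n; rewrite /=; ring.
under eq_bigr do rewrite E.
have D m : Pv m a * Pv m c / J22 S m m =
   \sum_(b < NB) (m == DbU b)%:R * ((den_b S b)^-1 * (a_b S b a * a_b S b c))
   + (m == DQU)%:R * ((den_Q S)^-1 * (a_Q S a * a_Q S c)).
  case: m => [b u k|q u k|b q k|b0|b|||b|b]; rewrite ?eqDbU /=;
    try by rewrite big1 => [|b1 _]; gen_eqs; ring.
  - rewrite (bigD1 b0) //= eqxx big1 => [|b bb0]; last by rewrite eqDbU (negbTE bb0) mul0r.
    rewrite J22E F2 /=; gen_eqs; ring.
  - rewrite big1 => [|b1 _]; last by gen_eqs; ring.
    rewrite J22E F3 /=; gen_eqs; ring.
under eq_bigr do rewrite D.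
rewrite big_split /= exchange_big /=; congr (_ + _).
- apply: eq_bigr => b _; exact: (@sum_delta _ (DbU b) (fun _ => (den_b S b)^-1 * (a_b S b a * a_b S b c))).
- exact: (@sum_delta _ DQU (fun _ => (den_Q S)^-1 * (a_Q S a * a_Q S c))).
Qed.

End H.

Theorem lemma25 (R : realFieldType) (NB NQ NU NK : nat)
  (S : system R NB NQ NU NK)
  (HJ2 : J22mx S \in unitmx) :
  G_PhiPhi S =
    \sum_(b < NB) (den_b S b)^-1 *: outer3 (a_b S b)
    + (den_Q S)^-1 *: outer3 (a_Q S).
Proof.
apply/matrixP => i j.
rewrite !mxE summxE (@GlossE _ _ _ _ _ S HJ2).
congr (_ + _); first apply: eq_bigr => b _; by rewrite !mxE.
Qed.
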